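(* Let $(Q,\mathcal M)$ be a modulated quiver with $Q$ a tree, $I$ an admissible ideal of $T(Q,\mathcal M)$, $\Psi$ a complexification isomorphism and $J=\Psi(\mathbf e(I\otimes_{\mathbb R}\mathbb C)\mathbf e)$. Let $\beta:u\to v$ and $\alpha:v\to w$ be arrows of $Q$ with $\mathcal M(v)=\mathbb C$. Then the path $\alpha\beta$ has exactly two fibers in $\Gamma$, of the form $p$ and $\tau(p)$, and $p\in J$ if and only if $\tau(p)\in J$.
   Context: Quivers $Q=(Q_0,Q_1,s,t)$ are finite; an arrow $\alpha$ goes from $s(\alpha)$ to $t(\alpha)$. Paths are written from right to left: a path of length $n\ge1$ is $p=\alpha_n\cdots\alpha_1$ with $t(\alpha_k)=s(\alpha_{k+1})$; each vertex $i$ has a trivial path $e_i$. $Q$ is a tree if its underlying graph is a tree. $\mathbb C\Gamma$ is the complex path algebra of $\Gamma$. Let $\mathbb H=\{\begin{bmatrix}a&b\\-\bar b&\bar a\end{bmatrix}:a,b\in\mathbb C\}\subset M_2(\mathbb C)$ be the real quaternions. A modulation $\mathcal M$ of $Q$ assigns to each vertex $i$ a division ring $\mathcal M(i)\in\{\mathbb R,\mathbb C,\mathbb H\}$ and to each arrow $\alpha$ a simple $\mathcal M(t(\alpha))$-$\mathcal M(s(\alpha))$-bimodule $\mathcal M(\alpha)$ on which $\mathbb R$ acts centrally; $(Q,\mathcal M)$ is a modulated quiver. Up to isomorphism there is exactly one such simple bimodule for each pair of these division rings other than $(\mathbb C,\mathbb C)$ (e.g. $\mathbb C^2$ as column vectors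 for the pair $(\mathbb H,\mathbb C)$ and as row vectors for $(\mathbb C,\mathbb H)$), and for $(\mathbb C,\mathbb C)$ there are exactly two: $\mathbb C$ with action $a\cdot z\cdot b=azb$, and $\overline{\mathbb C}$, which is $\mathbb C$ as a set with action $a\cdot z\cdot b=az\bar b$. For a path $p=\alpha_n\cdots\alpha_1$ put $\mathcal M(p)=\mathcal M(\alpha_n)\otimes_{\mathcal M(s(\alpha_n))}\cdots\otimes_{\mathcal M(s(\alpha_2))}\mathcal M(\alpha_1)$, and $\mathcal M(e_i)=\mathcal M(i)$. The tensor algebra is $T(Q,\mathcal M)=\prod_{i\in Q_0}\mathcal M(i)\oplus\bigoplus_{p}\mathcal M(p)$ (sum over paths of length $\ge1$). An ideal $I$ of $T(Q,\mathcal M)$ is admissible if $A^m\subseteq I\subseteq A^2$ for some $m\ge2$, where $A$ is the ideal generated by $\bigoplus_{\alpha\in Q_1}\mathcal M(\alpha)$. The quiver $\Gamma$ of $(Q,\mathcal M)$: each $i\in Q_0$ with $\mathcal M(i)\in\{\mathbb R,\mathbb H\}$ gives one vertex $i$ of $\Gamma$; each $i$ with $\mathcal M(i)=\mathbb C$ gives two vertices $i,\bar i$. Each arrow $\alpha:i\to j$ of $Q$ gives arrows of $\Gamma$ as follows: if $\mathcal M(i)=\mathcal M(j)\in\{\mathbb R,\mathbb H\}$, one arrow $\alpha:i\to j$; if $\mathcal M(i)=\mathbb C$ and $\mathcal M(j)\in\{\mathbb R,\mathbb H\}$, arrows $\alpha:i\to j$, $\bar\alpha:\bar i\to j$; if $\mathcal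 M(i)\in\{\mathbb R,\mathbb H\}$ and $\mathcal M(j)=\mathbb C$, arrows $\alpha:i\to j$, $\bar\alpha:i\to\bar j$; if $\{\mathcal M(i),\mathcal M(j)\}=\{\mathbb R,\mathbb H\}$, two arrows $\alpha,\bar\alpha:i\to j$; if $\mathcal M(i)=\mathcal M(j)=\mathbb C$ and $\mathcal M(\alpha)=\mathbb C$, arrows $\alpha:i\to j$, $\bar\alpha:\bar i\to\bar j$; if $\mathcal M(i)=\mathcal M(j)=\mathbb C$ and $\mathcal M(\alpha)=\overline{\mathbb C}$, arrows $\alpha:\bar i\to j$, $\bar\alpha:i\to\bar j$. The map $\pi:\Gamma\to Q$ sends $i,\bar i\mapsto i$ and $\alpha,\bar\alpha\mapsto\alpha$; $\tau$ is the quiver automorphism of $\Gamma$ exchanging $i\leftrightarrow\bar i$ and $\alpha\leftrightarrow\bar\alpha$ whenever the barred element exists and fixing all other vertices and arrows. A vertex or arrow $x$ of $\Gamma$ is a fiber of $\pi(x)$; a path $\beta_n\cdots\beta_1$ of $\Gamma$ is a fiber of the path $\pi(\beta_n)\cdots\pi(\beta_1)$ of $Q$, and the fibers of a trivial path $e_i$ are the trivial paths $e_{i'}$ with $i'$ a fiber of $i$. Identify $\mathbb R\otimes_{\mathbb R}\mathbb C=\mathbb C$, $\mathbb H\otimes_{\mathbb R}\mathbb C\cong M_2(\mathbb C)$ via $h\otimes c\mapsto ch$, and $\mathbb C\otimes_{\mathbb R}\mathbb C\cong\mathbb C\times\mathbb C$ via $a\otimes b\mapsto(ab,\bar ab)$.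 Let $\mathbf e=(\epsilon_i)_{i\in Q_0}\in\prod_i\mathcal M(i)\otimes_{\mathbb R}\mathbb C\subseteq T(Q,\mathcal M)\otimes_{\mathbb R}\mathbb C$, where $\epsilon_i=1$ if $\mathcal M(i)\in\{\mathbb R,\mathbb C\}$ and $\epsilon_i$ corresponds to the matrix unit $\begin{bmatrix}1&0\\0&0\end{bmatrix}$ if $\mathcal M(i)=\mathbb H$. A complexification isomorphism for $(Q,\mathcal M)$ is a $\mathbb C$-algebra isomorphism $\Psi:\mathbf e(T(Q,\mathcal M)\otimes_{\mathbb R}\mathbb C)\mathbf e\to\mathbb C\Gamma$ such that for every path $p$ of $Q$ (trivial or not), $\Psi(\mathbf e(\mathcal M(p)\otimes_{\mathbb R}\mathbb C)\mathbf e)=\bigoplus_q\mathbb Cq$, the sum over all fibers $q$ of $p$ in $\Gamma$; such isomorphisms exist. *)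

(* Defs.v *)
From HB Require Import structures.
From mathcomp Require Import all_boot all_algebra.
From mathcomp Require Import reals complex.

Set Implicit Arguments.
Unset Strict Implicit.
Unset Printing Implicit Defensive.

Import GRing.Theory Num.Theory.
Local Open Scope ring_scope.
Local Open Scope complex_scope.

(* The three division rings R, C, H, all realised (as in the paper) inside  *)
(* M_2(C):  H = { [a b; -b^* a^*] },  C = { [a 0; 0 a^*] },  R = real a.    *)

Inductive dkind := KR | KC | KH.

Definition isC (k : dkind) : bool := if k is KC then true else false.

Definition kmax (k1 k2 : dkind) : dkind :=
  match k1, k2 with
  | KH, _ | _, KH => KH
  | KC, _ | _, KC => KC
  | _, _ => KR
  end.

Section DivRings.
Variable R : realType.

Definition qmat (a b : R[i]) : 'M[R[i]]_2 :=
  \matrix_(i < 2, j < 2)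
    if i == 0 :> nat then (if j == 0 :> nat then a else b)
    else (if j == 0 :> nat then - conjc b else conjc a).

Definition inD (k : dkind) (x : 'M[R[i]]_2) : Prop :=
  match k with
  | KR => exists r : R, x = qmat r%:C 0
  | KC => exists a : R[i], x = qmat a 0
  | KH => exists a b : R[i], x = qmat a b
  end.

(* entrywise complex conjugation: on C = {qmat a 0} it is a |-> conj a *)
Definition conjm (x : 'M[R[i]]_2) : 'M[R[i]]_2 := map_mx conjc x.

End DivRings.

(* Modulated quivers.  A modulation is given up to isomorphism, using the   *)
(* classification of simple bimodules recalled in the context: a division   *)
(* ring kind dk i for each vertex, and for arrows between two C-vertices a  *)
(* flag cj (true = the bimodule \bar C, false = C).  For non C-C arrows cj  *)
(* is irrelevant.                                                           *)

Record mquiver := MQuiver {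
  Q0 : finType;
  Q1 : finType;
  src : Q1 -> Q0;
  tgt : Q1 -> Q0;
  dk : Q0 -> dkind;
  cj : Q1 -> bool
}.

Section Quiver.
Variable M : mquiver.
Local Notation s := (src (m:=M)).
Local Notation t := (tgt (m:=M)).

(* underlying graph is a tree: connected and without cycles, where a cycle *)
(* is a nonempty closed walk using pairwise distinct arrows (each arrow     *)
(* traversed forwards (true) or backwards (false)).                        *)
Definition qadj : rel (Q0 M) := fun i j =>
  [exists a, ((s a == i) && (t a == j)) || ((s a == j) && (t a == i))].

Definition wsrc (x : Q1 M * bool) : Q0 M := if x.2 then s x.1 else t x.1.
Definition wtgt (x : Q1 M * bool) : Q0 M := if x.2 then t x.1 else s x.1.

Definition is_tree : Prop :=
  (forall i j, connect qadj i j) /\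
  (forall w : seq (Q1 M * bool), w != [::] -> uniq (map fst w) ->
      ~~ cycle (fun x y => wtgt x == wsrc y) w).

(* paths of Q: (start vertex, [:: a_1; ...; a_n]) standing for a_n ... a_1 *)
Fixpoint qchain (v : Q0 M) (l : seq (Q1 M)) : bool :=
  if l is a :: l' then (s a == v) && qchain (t a) l' else true.

(* vertices (i, false) = i, (i, true) = \bar i (only when M(i) = C);        *)
(* arrows (a, false) = a, (a, true) = \bar a (only when it exists).         *)

Definition barok (a : Q1 M) : bool :=
  match dk (s a), dk (t a) with
  | KC, _ | _, KC => true
  | KR, KH | KH, KR => true
  | _, _ => false
  end.

Definition gvert_ok (v : Q0 M * bool) : bool := v.2 ==> isC (dk v.1).
Definition garr_ok (x : Q1 M * bool) : bool := x.2 ==> barok x.1.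

Definition gsrc (x : Q1 M * bool) : Q0 M * bool :=
  let (a, b) := x in
  match dk (s a), dk (t a) with
  | KC, KC => if cj a then (s a, ~~ b) else (s a, b)
  | KC, _ => (s a, b)
  | _, _ => (s a, false)
  end.

Definition gtgt (x : Q1 M * bool) : Q0 M * bool :=
  let (a, b) := x in
  match dk (t a) with
  | KC => (t a, b)
  | _ => (t a, false)
  end.

Definition gpath := ((Q0 M * bool) * seq (Q1 M * bool))%type.

Fixpoint gchain (v : Q0 M * bool) (l : seq (Q1 M * bool)) : bool :=
  if l is x :: l' then (gsrc x == v) && gchain (gtgt x) l' else true.

Definition gvalid (p : gpath) : bool :=
  [&& gvert_ok p.1, all garr_ok p.2 & gchain p.1 p.2].

Definition gend (p : gpath) : Q0 M * bool := last p.1 (map gtgt p.2).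

Definition tauv (v : Q0 M * bool) : Q0 M * bool :=
  (v.1, if isC (dk v.1) then ~~ v.2 else v.2).
Definition taua (x : Q1 M * bool) : Q1 M * bool :=
  (x.1, if barok x.1 then ~~ x.2 else x.2).
Definition taup (p : gpath) : gpath := (tauv p.1, map taua p.2).

Definition is_fiber (q : gpath) (p : Q0 M * seq (Q1 M)) : Prop :=
  [/\ gvalid q, q.1.1 = p.1 & map fst q.2 = p.2].

Section PathAlgebra.
Variable R : realType.

Definition cg := gpath -> R[i].

Definition cg_supp (f : cg) : Prop := forall q, ~~ gvalid q -> f q = 0.

(* (f g)(r) = sum over r = p q (q first, then p) of f p * g q *)
Definition cg_mul (f g : cg) : cg := fun q =>
  \sum_(k < (size q.2).+1)
     f (gend (q.1, take k q.2), drop k q.2) * g (q.1, take k q.2).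

Definition cg_one : cg := fun q =>
  if (q.2 == [::]) && gvert_ok q.1 then 1 else 0.

Definition cg_delta (p : gpath) : cg := fun q => (q == p)%:R.

End PathAlgebra.

Section Tensor.
Variable R : realType.
Local Notation U := 'M[R[i]]_2.

(* the simple M(t a)-M(s a)-bimodule M(a): carrier = the larger division  *)
(* ring, action x . m . y = x m y (resp. x m \bar y for \bar C).           *)
Definition carrier (a : Q1 M) : U -> Prop := inD (kmax (dk (s a)) (dk (t a))).

Definition tw (a : Q1 M) (y : U) : U :=
  if [&& isC (dk (s a)), isC (dk (t a)) & cj a] then conjm y else y.

(* A representation of the modulation in an R-algebra B: unital algebra   *)
(* maps prod_i M(i) -> B (given by vm) and a bimodule map (+)_a M(a) -> B.  *)
Definition mod_rep (B : algType R) (vm : Q0 M -> U -> B)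
    (am : Q1 M -> U -> B) : Prop :=
  [/\ forall i x y, inD (dk i) x -> inD (dk i) y ->
        vm i (x + y) = vm i x + vm i y /\ vm i (x * y) = vm i x * vm i y,
      forall i (r : R), vm i (qmat r%:C 0) = r *: vm i 1,
      (forall i j, i != j -> vm i 1 * vm j 1 = 0) /\ \sum_i vm i 1 = 1,
      forall a m m', carrier a m -> carrier a m' ->
        am a (m + m') = am a m + am a m' &
      forall a x m y, inD (dk (t a)) x -> carrier a m -> inD (dk (s a)) y ->
        am a (x * m * tw a y) = vm (t a) x * am a m * vm (s a) y].

Definition alg_hom (B C : algType R) (f : B -> C) : Prop :=
  [/\ forall x y, f (x + y) = f x + f y,
      forall x y, f (x * y) = f x * f y,
      f 1 = 1 &
      forall (r : R) x, f (r *: x) = r *: f x].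

(* (T, vm, am) is the tensor algebra T(Q, M), characterised up to unique  *)
(* isomorphism by its universal property.                                 *)
Definition is_tensor_alg (T : algType R) (vm : Q0 M -> U -> T)
    (am : Q1 M -> U -> T) : Prop :=
  mod_rep vm am /\
  forall (B : algType R) (vm' : Q0 M -> U -> B) (am' : Q1 M -> U -> B),
    mod_rep vm' am' ->
    exists f : T -> B,
      [/\ alg_hom f,
          forall i x, inD (dk i) x -> f (vm i x) = vm' i x,
          forall a m, carrier a m -> f (am a m) = am' a m &
          forall g : T -> B, alg_hom g ->
            (forall i x, inD (dk i) x -> g (vm i x) = vm' i x) ->
            (forall a m, carrier a m -> g (am a m) = am' a m) ->
            forall z, g z = f z].

Section InT.
Variables (T : algType R) (vm : Q0 M -> U -> T) (am : Q1 M -> U -> T).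

Definition rspan (S : T -> Prop) (x : T) : Prop :=
  exists l : seq (R * T), (forall p, p \in l -> S p.2) /\
    x = \sum_(p <- l) p.1 *: p.2.

(* products am a_n m_n * ... * am a_1 m_1, m_k in M(a_k) *)
Fixpoint arr_prods (l : seq (Q1 M)) (y : T) : Prop :=
  if l is a :: l' then
    exists m z, [/\ carrier a m, arr_prods l' z & y = z * am a m]
  else y = 1.

Definition Mpath (p : Q0 M * seq (Q1 M)) (x : T) : Prop :=
  if p.2 is [::] then exists y, inD (dk p.1) y /\ x = vm p.1 y
  else rspan (arr_prods p.2) x.

Definition is_ideal (I : T -> Prop) : Prop :=
  [/\ I 0, forall x y, I x -> I y -> I (x + y),
      forall (r : R) x, I x -> I (r *: x),
      forall a x, I x -> I (a * x) & forall a x, I x -> I (x * a)].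

Definition ideal_gen (S : T -> Prop) : T -> Prop :=
  rspan (fun y => exists a z b, S z /\ y = a * z * b).

Definition Aideal : T -> Prop :=
  ideal_gen (fun z => exists a m, carrier a m /\ z = am a m).

Definition ideal_pow (A : T -> Prop) (m : nat) : T -> Prop :=
  rspan (fun y => exists l : seq T,
     [/\ size l = m, forall z, z \in l -> A z & y = \prod_(z <- l) z]).

Definition admissible (I : T -> Prop) : Prop :=
  is_ideal I /\ exists m, [/\ (2 <= m)%N,
     forall x, ideal_pow Aideal m x -> I x &
     forall x, I x -> ideal_pow Aideal 2 x].

(* (x, y) stands for x (x) 1 + y (x) i.                                   *)
Definition tc := (T * T)%type.
Definition tc_add (z w : tc) : tc := (z.1 + w.1, z.2 + w.2).
Definition tc_mul (z w : tc) : tc :=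
  (z.1 * w.1 - z.2 * w.2, z.1 * w.2 + z.2 * w.1).
Definition tc_scale (c : R[i]) (z : tc) : tc :=
  let: a +i* b := c in (a *: z.1 - b *: z.2, a *: z.2 + b *: z.1).

(* epsilon_i: 1 for M(i) in {R, C}; for M(i) = H the element of H (x) C    *)
(* mapped to the matrix unit E11 by h (x) c |-> c h, namely                *)
(* (1/2) (x) 1 + (-(1/2) i_H) (x) i, where i_H = qmat 'i 0 = diag(i, -i).   *)
Definition eps (i : Q0 M) : tc :=
  if dk i is KH then (vm i (qmat (2^-1 : R)%:C 0), vm i (qmat (- ((2^-1 : R)%:C * 'i)) 0))
  else (vm i 1, 0).

Definition ebf : tc := (\sum_i (eps i).1, \sum_i (eps i).2).

Definition sandwich (z : tc) : tc := tc_mul (tc_mul ebf z) ebf.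

Definition in_eTe (z : tc) : Prop := exists y, z = sandwich y.

Definition is_cx_iso (Psi : tc -> cg R) : Prop :=
  [/\ forall z w, in_eTe z -> in_eTe w ->
        forall q, Psi (tc_add z w) q = Psi z q + Psi w q,
      forall c z, in_eTe z -> forall q, Psi (tc_scale c z) q = c * Psi z q,
      forall z w, in_eTe z -> in_eTe w ->
        forall q, Psi (tc_mul z w) q = cg_mul (Psi z) (Psi w) q,
      forall q, Psi ebf q = cg_one R q &
      [/\ forall z, in_eTe z -> cg_supp (Psi z),
          forall z w, in_eTe z -> in_eTe w ->
            (forall q, Psi z q = Psi w q) -> z = w,
          forall f, cg_supp f -> exists z, in_eTe z /\ forall q, Psi z q = f q &
          (* Psi (e (M(p) (x) C) e) = (+)_{q fiber of p} C q *)
          forall p : Q0 M * seq (Q1 M), qchain p.1 p.2 ->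
            forall f : cg R,
              (exists z, [/\ Mpath p z.1, Mpath p z.2 &
                             forall q, Psi (sandwich z) q = f q])
              <-> (forall q, f q != 0 -> is_fiber q p)]].

Definition inJ (I : T -> Prop) (Psi : tc -> cg R) (f : cg R) : Prop :=
  exists z, [/\ I z.1, I z.2 & forall q, Psi (sandwich z) q = f q].

End InT.
End Tensor.
End Quiver.

(* Main.v *)
Require Import Defs.
From HB Require Import structures.
From mathcomp Require Import all_boot all_algebra.
From mathcomp Require Import reals complex.
Set Implicit Arguments.
Unset Strict Implicit.
Unset Printing Implicit Defensive.
Import GRing.Theory Num.Theory.
Local Open Scope ring_scope.
From mathcomp Require Import ssrAC ring.
Local Open Scope complex_scope.
Section Mat.
Variable R : realType.
Implicit Types a b c d : R[i].

Lemma qmatM a b c d : qmat a b * qmat c d = qmat (a*c - b*d^*) (a*d + b*c^*).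
Proof.
apply/matrixP=> i j; rewrite !mxE big_ord_recr big_ord_recr big_ord0 !mxE /=.
case: a b c d => [a1 a2] [b1 b2] [c1 c2] [d1 d2].
case: i => [[|[|i]] Hi] //=; case: j => [[|[|j]] Hj] //=; rewrite add0r;
 apply/eqP; rewrite eq_complex /=; apply/andP; split; apply/eqP; ring.
Qed.

Lemma qmatD a b c d : qmat a b + qmat c d = qmat (a + c) (b + d).
Proof.
apply/matrixP=> i j; rewrite !mxE /=.
case: a b c d => [a1 a2] [b1 b2] [c1 c2] [d1 d2].
case: i => [[|[|i]] Hi] //=; case: j => [[|[|j]] Hj] //=;
 apply/eqP; rewrite eq_complex /=; apply/andP; split; apply/eqP; ring.
Qed.

Lemma qmatN a b : - qmat a b = qmat (- a) (- b).
Proof.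
apply/matrixP=> i j; rewrite !mxE /=.
case: a b => [a1 a2] [b1 b2].
case: i => [[|[|i]] Hi] //=; case: j => [[|[|j]] Hj] //=;
 apply/eqP; rewrite eq_complex /=; apply/andP; split; apply/eqP; ring.
Qed.

Lemma qmat1 : qmat 1 0 = 1 :> 'M[R[i]]_2.
Proof.
apply/matrixP=> i j; rewrite !mxE /=.
case: i => [[|[|i]] Hi] //=; case: j => [[|[|j]] Hj] //=;
 apply/eqP; rewrite eq_complex /=; apply/andP; split; apply/eqP; ring.
Qed.

Lemma qmat0 : qmat 0 0 = 0 :> 'M[R[i]]_2.
Proof.
apply/matrixP=> i j; rewrite !mxE /=.
case: i => [[|[|i]] Hi] //=; case: j => [[|[|j]] Hj] //=;
 apply/eqP; rewrite eq_complex /=; apply/andP; split; apply/eqP; ring.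
Qed.

Lemma qmat_inj a b c d : qmat a b = qmat c d -> a = c /\ b = d.
Proof.
move=> /matrixP E; have := E 0 0; have := E 0 1; rewrite !mxE /=.
by move=> -> ->.
Qed.

Lemma conjm_qmat a b : conjm (qmat a b) = qmat a^* b^*.
Proof.
apply/matrixP=> i j; rewrite !mxE /=.
case: a b => [a1 a2] [b1 b2].
case: i => [[|[|i]] Hi] //=; case: j => [[|[|j]] Hj] //=;
 apply/eqP; rewrite eq_complex /=; apply/andP; split; apply/eqP; ring.
Qed.

Lemma inD1 k : inD k (1 : 'M[R[i]]_2).
Proof. by rewrite -qmat1; case: k => /=; [exists 1 | exists 1 | exists 1, 0]. Qed.

Lemma inD0 k : inD k (0 : 'M[R[i]]_2).
Proof. by rewrite -qmat0; case: k => /=; [exists 0 | exists 0 | exists 0, 0]. Qed.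

Lemma rcM (r s : R) : (r * s)%:C = r%:C * s%:C :> R[i].
Proof. apply/eqP; rewrite eq_complex /=; apply/andP; split; apply/eqP; ring. Qed.
Lemma rcD (r s : R) : (r + s)%:C = r%:C + s%:C :> R[i].
Proof. apply/eqP; rewrite eq_complex /=; apply/andP; split; apply/eqP; ring. Qed.
Lemma rcN (r : R) : (- r)%:C = - r%:C :> R[i].
Proof. apply/eqP; rewrite eq_complex /=; apply/andP; split; apply/eqP; ring. Qed.

Lemma inDM k (x y : 'M[R[i]]_2) : inD k x -> inD k y -> inD k (x * y).
Proof.
case: k => /=.
- by move=> [r ->] [s ->]; exists (r * s); rewrite qmatM rcM mul0r subr0 mulr0 mul0r addr0.
- by move=> [r ->] [s ->]; exists (r * s); rewrite qmatM mul0r subr0 mulr0 mul0r addr0.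
- by move=> [a [b ->]] [c [d ->]]; rewrite qmatM; do 2 eexists.
Qed.

Lemma inDD k (x y : 'M[R[i]]_2) : inD k x -> inD k y -> inD k (x + y).
Proof.
case: k => /=.
- by move=> [r ->] [s ->]; exists (r + s); rewrite qmatD rcD addr0.
- by move=> [r ->] [s ->]; exists (r + s); rewrite qmatD addr0.
- by move=> [a [b ->]] [c [d ->]]; rewrite qmatD; do 2 eexists.
Qed.

Lemma inDN k (x : 'M[R[i]]_2) : inD k x -> inD k (- x).
Proof.
case: k => /=.
- by move=> [r ->]; exists (- r); rewrite qmatN rcN oppr0.
- by move=> [r ->]; exists (- r); rewrite qmatN oppr0.
- by move=> [a [b ->]]; rewrite qmatN; do 2 eexists.
Qed.

Lemma inD_RC (x : 'M[R[i]]_2) : inD KR x -> inD KC x.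
Proof. by move=> [r ->]; exists r%:C. Qed.
Lemma inD_CH (x : 'M[R[i]]_2) : inD KC x -> inD KH x.
Proof. by move=> [r ->]; exists r, 0. Qed.

Lemma inD_maxl k k' (x : 'M[R[i]]_2) : inD k x -> inD (kmax k k') x.
Proof.
case: k; case: k' => //= H; by [apply: inD_RC | apply: inD_CH | apply/inD_CH/inD_RC].
Qed.
Lemma inD_maxr k k' (x : 'M[R[i]]_2) : inD k' x -> inD (kmax k k') x.
Proof.
case: k; case: k' => //= H; by [apply: inD_RC | apply: inD_CH | apply/inD_CH/inD_RC].
Qed.

Lemma inD_conj k (x : 'M[R[i]]_2) : inD k x -> inD k (conjm x).
Proof.
case: k => /=.
- by move=> [r ->]; exists r; rewrite conjm_qmat conjc_real conjc0.
- by move=> [r ->]; exists r^*; rewrite conjm_qmat conjc0.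
- by move=> [a [b ->]]; rewrite conjm_qmat; do 2 eexists.
Qed.
End Mat.

Section VM.
Variables (R : realType) (M : mquiver) (T : algType R).
Variables (vm : Q0 M -> 'M[R[i]]_2 -> T) (am : Q1 M -> 'M[R[i]]_2 -> T).
Hypothesis Hrep : mod_rep vm am.
Local Notation D i := (@inD R (dk i)).

Lemma vmD i x y : D i x -> D i y -> vm i (x + y) = vm i x + vm i y.
Proof. by case: Hrep => H _ _ _ _ Hx Hy; case: (H i x y Hx Hy). Qed.
Lemma vmM i x y : D i x -> D i y -> vm i (x * y) = vm i x * vm i y.
Proof. by case: Hrep => H _ _ _ _ Hx Hy; case: (H i x y Hx Hy). Qed.
Lemma vm0 i : vm i 0 = 0.
Proof.
have := vmD (inD0 _ (dk i)) (inD0 _ (dk i)); rewrite addr0 => /eqP.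
by rewrite -subr_eq subrr eq_sym => /eqP.
Qed.
Lemma vmN i x : D i x -> vm i (- x) = - vm i x.
Proof.
move=> Hx; apply/eqP; rewrite -addr_eq0 -vmD ?addNr ?vm0 //; exact: inDN.
Qed.
Lemma vmB i x y : D i x -> D i y -> vm i (x - y) = vm i x - vm i y.
Proof. by move=> Hx Hy; rewrite vmD ?vmN //; exact: inDN. Qed.
Lemma vm1l i x : D i x -> vm i 1 * vm i x = vm i x.
Proof. by move=> Hx; rewrite -vmM ?mul1r //; exact: inD1. Qed.
Lemma vm1r i x : D i x -> vm i x * vm i 1 = vm i x.
Proof. by move=> Hx; rewrite -vmM ?mulr1 //; exact: inD1. Qed.
Lemma vm_orth i j x y : i != j -> D i x -> D j y -> vm i x * vm j y = 0.
Proof.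
case: Hrep => _ _ [Ho _] _ _ Hij Hx Hy.
by rewrite -(vm1r Hx) -(vm1l Hy) mulrA -(mulrA (vm i x)) Ho // mulr0 mul0r.
Qed.
Lemma sum_vm1 : \sum_i vm i 1 = 1.
Proof. by case: Hrep => _ _ [_ ->]. Qed.

Lemma sumvm_l (a : Q0 M -> 'M[R[i]]_2) j y : (forall i, D i (a i)) -> D j y ->
  (\sum_i vm i (a i)) * vm j y = vm j (a j * y).
Proof.
move=> Ha Hy; rewrite mulr_suml (bigD1 j) //= big1 ?addr0 ?vmM //.
by move=> i Hij; rewrite vm_orth.
Qed.
Lemma sumvm_r (a : Q0 M -> 'M[R[i]]_2) j y : (forall i, D i (a i)) -> D j y ->
  vm j y * (\sum_i vm i (a i)) = vm j (y * a j).
Proof.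
move=> Ha Hy; rewrite mulr_sumr (bigD1 j) //= big1 ?addr0 ?vmM //.
by move=> i Hij; rewrite vm_orth // eq_sym.
Qed.
Lemma sumvm_M (a b : Q0 M -> 'M[R[i]]_2) : (forall i, D i (a i)) -> (forall i, D i (b i)) ->
  (\sum_i vm i (a i)) * (\sum_i vm i (b i)) = \sum_i vm i (a i * b i).
Proof.
move=> Ha Hb; rewrite mulr_suml; apply: eq_bigr => i _; exact: (sumvm_r Hb (Ha i)).
Qed.

Lemma tw1 (a : Q1 M) : tw a 1 = 1 :> 'M[R[i]]_2.
Proof. by rewrite /tw; case: ifP => // _; rewrite -qmat1 conjm_qmat conjc1 conjc0. Qed.
Lemma inD_tw (a : Q1 M) y : D (src a) y -> D (src a) (tw a y).
Proof. by rewrite /tw; case: ifP => // _; apply: inD_conj. Qed.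

Lemma am_id a m : carrier a m -> am a m = vm (tgt a) 1 * am a m * vm (src a) 1.
Proof.
case: Hrep => _ _ _ _ H Hm; have := H a 1 m 1 (inD1 _ _) Hm (inD1 _ _).
by rewrite tw1 mul1r mulr1.
Qed.

Lemma am_r a m : carrier a m -> am a m * vm (src a) 1 = am a m.
Proof.
move=> Hm; rewrite {1}(am_id Hm) -mulrA (vm1l (inD1 _ _)) -(am_id Hm) //.
Qed.
Lemma am_l a m : carrier a m -> vm (tgt a) 1 * am a m = am a m.
Proof.
move=> Hm; rewrite {1}(am_id Hm) !mulrA (vm1l (inD1 _ _)) -(am_id Hm) //.
Qed.

Lemma vm_am i x a m : D i x -> carrier a m ->
  vm i x * am a m = if i == tgt a then am a (x * m) else 0.
Proof.
move=> Hx Hm; case: eqP => [Hi|/eqP Hne]; first subst i.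
  case: Hrep => _ _ _ _ H; have := H a x m 1 Hx Hm (inD1 _ _).
  by rewrite tw1 mulr1 -mulrA am_r // => ->.
by rewrite -(am_l Hm) mulrA vm_orth ?mul0r //; exact: inD1.
Qed.

Lemma am_vm i y a m : D i y -> carrier a m ->
  am a m * vm i y = if i == src a then am a (m * tw a y) else 0.
Proof.
move=> Hy Hm; case: eqP => [Hi|/eqP Hne]; first subst i.
  case: Hrep => _ _ _ _ H; have := H a 1 m y (inD1 _ _) Hm Hy.
  by rewrite mul1r am_l // => ->.
by rewrite -(am_r Hm) -mulrA vm_orth ?mulr0 //; [by rewrite eq_sym| exact: inD1].
Qed.
Lemma sumvm_am (a : Q0 M -> 'M[R[i]]_2) b m : (forall i, D i (a i)) -> carrier b m ->
  (\sum_i vm i (a i)) * am b m = am b (a (tgt b) * m).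
Proof.
move=> Ha Hm; rewrite mulr_suml (bigD1 (tgt b)) //= big1 ?addr0 ?vm_am ?eqxx //.
by move=> i Hi; rewrite vm_am // (negbTE Hi).
Qed.
Lemma am_sumvm (a : Q0 M -> 'M[R[i]]_2) b m : (forall i, D i (a i)) -> carrier b m ->
  am b m * (\sum_i vm i (a i)) = am b (m * tw b (a (src b))).
Proof.
move=> Ha Hm; rewrite mulr_sumr (bigD1 (src b)) //= big1 ?addr0 ?am_vm ?eqxx //.
by move=> i Hi; rewrite am_vm // (negbTE Hi).
Qed.
End VM.
Section Fib.
Variables (M : mquiver) (be al : Q1 M).
Hypothesis Hv : tgt be = src al.
Hypothesis HC : dk (src al) = KC.

Definition c2 (b : bool) := if isC (dk (tgt al)) && cj al then ~~ b else b.
Definition fib (b : bool) : gpath M := (gsrc (be, b), [:: (be, b); (al, c2 b)]).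

Lemma dkv : dk (tgt be) = KC. Proof. by rewrite Hv. Qed.
Local Arguments gsrc : simpl never.
Local Arguments gtgt : simpl never.

Lemma gtgt_be b : gtgt (be, b) = (src al, b).
Proof. by rewrite /gtgt dkv Hv. Qed.

Lemma gsrc_al b : gsrc (al, c2 b) = (src al, b).
Proof.
rewrite /gsrc /c2 HC; case: (dk (tgt al)) => //=; by case: (cj al); rewrite ?negbK.
Qed.

Lemma gsrc_be1 b : (gsrc (be, b)).1 = src be.
Proof. by rewrite /gsrc; case: (dk (src be)); case: (dk (tgt be)) => //; case: (cj be). Qed.

Lemma fib_valid b : gvalid (fib b).
Proof.
rewrite /gvalid /fib /= gtgt_be gsrc_al !eqxx /= !andbT /gvert_ok /garr_ok /barok /gsrc dkv HC /=.
by case E: (dk (src be)); try case: (cj be); rewrite /= ?E ?implybT.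
Qed.

Lemma fib_fiber b : is_fiber (fib b) (src be, [:: be; al]).
Proof. by split; [exact: fib_valid | exact: gsrc_be1 | ]. Qed.

Lemma fiberP q : is_fiber q (src be, [:: be; al]) -> exists b, q = fib b.
Proof.
case: q => [q1 [|[a1 b1] [|[a2 b2] [|x l]]]] [Hval H1 /= H2] //.
case: H2 => E1 E2; subst a1 a2; exists b1.
move: Hval; rewrite /gvalid /= gtgt_be => /and3P [_ _ /and3P [/eqP H3 /eqP H4 _]].
rewrite /fib H3; congr (_, [:: _; (al, _)]).
move: H4; rewrite /gsrc /c2 HC; case: (dk (tgt al)) => //=; try by case.
by case: (cj al) => /= -[] <-; rewrite ?negbK.
Qed.

Lemma c2N b : c2 (~~ b) = ~~ c2 b.
Proof. by rewrite /c2; case: ifP. Qed.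

Lemma barok_be : barok be. Proof. by rewrite /barok dkv; case: (dk (src be)). Qed.
Lemma barok_al : barok al. Proof. by rewrite /barok HC; case: (dk (tgt al)). Qed.

Lemma taup_fib b : taup (fib b) = fib (~~ b).
Proof.
rewrite /taup /fib /= /taua /= barok_be barok_al c2N; congr (_, _).
by rewrite /tauv /gsrc dkv; case E: (dk (src be)) => //=; try case: (cj be); rewrite /= E.
Qed.

Lemma fib_neq b : fib b <> fib (~~ b).
Proof. by rewrite /fib; case=> _ /eqP; case: b. Qed.

Lemma gtgt1 (x : Q1 M * bool) : (gtgt x).1 = tgt x.1.
Proof. by case: x => a c; rewrite /gtgt; case: (dk (tgt a)). Qed.

Lemma gend_fib b k : src be != src al -> tgt al != src al ->
  gend ((fib b).1, take k (fib b).2) != (src al, ~~ b).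
Proof.
move=> H1 H2; case: k => [|[|k]]; rewrite /gend /=.
- by apply/eqP => /(congr1 fst); rewrite gsrc_be1; apply/eqP.
- by rewrite gtgt_be; apply/eqP; case; case: b.
- by apply/eqP => /(congr1 fst); rewrite gtgt1; apply/eqP.
Qed.
End Fib.

Lemma tree_noloop (M : mquiver) (a : Q1 M) : is_tree M -> src a != tgt a.
Proof.
case=> _ H; have := H [:: (a, true)] isT isT; rewrite /cycle /= /wtgt /wsrc /= andbT.
by rewrite eq_sym.
Qed.
Section CG.
Variables (M : mquiver) (R : realType).

Lemma cg_mul_delta (x y q : gpath M) :
  cg_mul (cg_delta R x) (cg_delta R y) q =
  ((gend y == x.1) && (q == (y.1, y.2 ++ x.2)))%:R.
Proof.
rewrite /cg_mul /cg_delta.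
case: q => [q1 l]; case: x => [x1 lx]; case: y => [y1 ly] /=.
case Hc: ((gend (y1, ly) == x1) && ((q1, l) == (y1, ly ++ lx))).
  move/andP: Hc => [/eqP Hg /eqP E].
  case: E => E1 E2; subst q1 l.

  have Hk : (size ly < (size (ly ++ lx)).+1)%N by rewrite size_cat ltnS leq_addr.
  rewrite (bigD1 (Ordinal Hk)) //= take_size_cat // drop_size_cat // Hg !eqxx mulr1 big1 ?addr0 //.
  move=> k /eqP Hne.
  case E3: ((y1, take k (ly ++ lx)) == (y1, ly)); last by rewrite mulr0.
  move/eqP: E3 => [Ht].
  exfalso; apply: Hne; apply: val_inj => /=.
  have := congr1 size Ht; rewrite size_take; case: ltnP => //.
  have := ltn_ord k; rewrite ltnS => h1 h2 <-; apply/eqP; rewrite eqn_leq h1 h2.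
  by [].
rewrite big1 // => k _.
case: eqP => [[Hg Hd]|]; last by rewrite mul0r.
case: eqP => [[E1 Ht]|]; last by rewrite mulr0.
move: Hc; rewrite -Hd -Ht -E1 cat_take_drop -Hg !eqxx //.
Qed.

Lemma cg_mul_delta_r (f : cg M R) (x r : gpath M) : r.1 != x.1 ->
  cg_mul f (cg_delta R x) r = 0.
Proof.
move=> Hr; rewrite /cg_mul big1 // => k _; rewrite /cg_delta.
case: eqP => [E|]; last by rewrite mulr0.
by move: Hr; rewrite -E eqxx.
Qed.

Lemma cg_mul_mid0 (f g : cg M R) (x p : gpath M) :
  (forall k, gend (p.1, take k p.2) != x.1) ->
  cg_mul (cg_mul f (cg_delta R x)) g p = 0.
Proof.
move=> H; rewrite {1}/cg_mul big1 // => k _.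
by rewrite cg_mul_delta_r ?mul0r //=; exact: H.
Qed.
End CG.
Section TC.
Variables (R : realType) (T : algType R).
Implicit Types x y z : tc T.
Ltac nrm := rewrite ?mulrDr ?mulrDl ?mulrBr ?mulrBl ?mulNr ?mulrN ?opprD ?opprK ?mulrA ?addrA.

Lemma tc_mulA x y z : tc_mul (tc_mul x y) z = tc_mul x (tc_mul y z).
Proof.
case: x y z => [a b] [c d] [e f]; rewrite /tc_mul /=.
congr (_, _); nrm.
  by rewrite [LHS](ACl (1*3*4*2)).
by rewrite [LHS](ACl (1*3*4*2)).
Qed.

Lemma tc_mul0r x : tc_mul x (0, 0) = (0, 0).
Proof. by rewrite /tc_mul !mulr0 subrr addr0. Qed.
Lemma tc_mul0l x : tc_mul (0, 0) x = (0, 0).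
Proof. by rewrite /tc_mul !mul0r subrr addr0. Qed.

Lemma tc_scale_mull (c : R[i]) x y : tc_mul (tc_scale c x) y = tc_scale c (tc_mul x y).
Proof.
case: c x y => [a b] [x1 x2] [y1 y2]; rewrite /tc_mul /tc_scale /=.
congr (_, _); rewrite ?scalerDr ?scalerBr ?mulrDl ?mulrBl ?mulNr ?opprD ?opprK -?scalerAl ?scalerN ?addrA.
  by rewrite [LHS](ACl (1*3*4*2)).
by rewrite [LHS](ACl (1*3*4*2)).
Qed.

Lemma tc_scale_mulr (c : R[i]) x y : tc_mul x (tc_scale c y) = tc_scale c (tc_mul x y).
Proof.
case: c x y => [a b] [x1 x2] [y1 y2]; rewrite /tc_mul /tc_scale /=.
congr (_, _); rewrite ?scalerDr ?scalerBr ?mulrDr ?mulrBr ?mulrN ?opprD ?opprK -?scalerAr ?scalerN ?addrA.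
  by rewrite [LHS](ACl (1*3*2*4)).
by rewrite [LHS](ACl (1*3*2*4)).
Qed.

Definition sg (G G' : T) (z : tc T) : tc T := (G * z.1 * G', - (G * z.2 * G')).

Lemma sgM G G' x y : G' * G = 1 -> sg G G' (tc_mul x y) = tc_mul (sg G G' x) (sg G G' y).
Proof.
move=> HG; case: x y => [a b] [c d]; rewrite /sg /tc_mul /=.
have E u v : G * u * G' * (G * v * G') = G * (u * v) * G'.
  by rewrite !mulrA -(mulrA _ G' G) HG mulr1 -!mulrA.
rewrite ?mulrN ?mulNr ?opprK !E.
by congr (_, _); rewrite ?mulrBr ?mulrBl ?mulrDr ?mulrDl ?opprD.
Qed.

Lemma sg_inj G G' x : G' * G = 1 -> sg G G' x = (0, 0) -> x = (0, 0).
Proof.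
move=> HG; case: x => [a b]; rewrite /sg /= => [[E1 /eqP]]; rewrite oppr_eq0 => /eqP E2.
have K u : G' * (G * u * G') * G = u by rewrite !mulrA HG mul1r -mulrA HG mulr1.
by rewrite -(K a) -(K b) E1 E2 !mulr0 !mul0r.
Qed.
End TC.
Ltac cx := apply/eqP; rewrite eq_complex /=; apply/andP; split; apply/eqP.
Section Cx.
Variable R : realType.
Implicit Types a c x y : R[i].

Lemma Hi : 'i * 'i = -1 :> R[i]. Proof. by cx; rewrite /=; ring. Qed.
Lemma sqP x y : (x + 'i*y)*(x + 'i*y) = (x*x - y*y) + 'i*(x*y + y*x).
Proof. transitivity (x*x + 'i*'i*(y*y) + 'i*(x*y+y*x)); [ring | rewrite Hi; ring]. Qed.
Lemma sqM x y : (x - 'i*y)*(x - 'i*y) = (x*x - y*y) - 'i*(x*y + y*x).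
Proof. transitivity (x*x + 'i*'i*(y*y) - 'i*(x*y+y*x)); [ring | rewrite Hi; ring]. Qed.
Lemma prP a c x y : (a + 'i*c)*(x + 'i*y) = (a*x - c*y) + 'i*(a*y + c*x).
Proof. transitivity (a*x + 'i*'i*(c*y) + 'i*(a*y+c*x)); [ring | rewrite Hi; ring]. Qed.
Lemma prM a c x y : (a - 'i*c)*(x - 'i*y) = (a*x - c*y) - 'i*(a*y + c*x).
Proof. transitivity (a*x + 'i*'i*(c*y) - 'i*(a*y+c*x)); [ring | rewrite Hi; ring]. Qed.

Lemma idem01 x : x * x = x -> x = 0 \/ x = 1.
Proof.
move=> H; have : x * (x - 1) = 0 by rewrite mulrBr mulr1 H subrr.
by move/eqP; rewrite mulf_eq0 subr_eq0 => /orP [/eqP|/eqP]; [left|right].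
Qed.

Lemma two_neq0 : (2 : R[i]) != 0. Proof. by rewrite pnatr_eq0. Qed.
Lemma i_neq0 : ('i : R[i]) != 0.
Proof. by apply/eqP => /eqP; rewrite eq_complex /= oner_eq0 andbF. Qed.

Lemma cx_key a c a' c' :
  a*a - c*c = a -> a*c + c*a = c -> a'*a' - c'*c' = a' -> a'*c' + c'*a' = c' ->
  a*a' - c*c' = 0 -> a*c' + c*a' = 0 -> ~ (a = 0 /\ c = 0) -> ~ (a' = 0 /\ c' = 0) ->
  a' = a /\ c' = - c.
Proof.
move=> H1 H2 H3 H4 H5 H6 Hn Hn'.
have Es : (a + 'i*c) * (a + 'i*c) = a + 'i*c by rewrite sqP H1 H2.
have Et : (a - 'i*c) * (a - 'i*c) = a - 'i*c by rewrite sqM H1 H2.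
have Es' : (a' + 'i*c') * (a' + 'i*c') = a' + 'i*c' by rewrite sqP H3 H4.
have Et' : (a' - 'i*c') * (a' - 'i*c') = a' - 'i*c' by rewrite sqM H3 H4.
have Ess : (a + 'i*c) * (a' + 'i*c') = 0 by rewrite prP H5 H6 mulr0 addr0.
have Ett : (a - 'i*c) * (a' - 'i*c') = 0 by rewrite prM H5 H6 mulr0 subr0.
have back x y s t : x + 'i*y = s -> x - 'i*y = t -> x = (s + t) / 2 /\ y = (s - t) / (2 * 'i).
  move=> <- <-; split; field; rewrite ?mulf_neq0 ?two_neq0 ?i_neq0 //.
case: (idem01 Es) => Hs; case: (idem01 Et) => Ht; case: (idem01 Es') => Hs'; case: (idem01 Et') => Ht'.
all: move: Ess Ett; rewrite ?Hs ?Ht ?Hs' ?Ht' ?mul0r ?mulr0 ?mul1r //= => Ess Ett.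
all: try (by move/eqP: Ess; rewrite oner_eq0); try (by move/eqP: Ett; rewrite oner_eq0).
all: try (by case: Hn; case: (back _ _ _ _ Hs Ht) => -> ->; rewrite ?addr0 ?subrr ?mul0r).
all: try (by case: Hn'; case: (back _ _ _ _ Hs' Ht') => -> ->; rewrite ?addr0 ?subrr ?mul0r).
all: case: (back _ _ _ _ Hs Ht) => -> ->; case: (back _ _ _ _ Hs' Ht') => -> ->.
all: by split; ring.
Qed.

End Cx.


Section Core.
Variables (R : realType) (M : mquiver) (T : algType R).
Variables (vm : Q0 M -> 'M[R[i]]_2 -> T) (am : Q1 M -> 'M[R[i]]_2 -> T).
Hypothesis Hrep : mod_rep vm am.
Local Notation D i := (@inD R (dk i)).
Local Notation e := (ebf vm).

Definition ea (i : Q0 M) : 'M[R[i]]_2 := if dk i is KH then qmat (2^-1 : R)%:C 0 else 1.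
Definition eb (i : Q0 M) : 'M[R[i]]_2 :=
  if dk i is KH then qmat (- ((2^-1 : R)%:C * 'i)) 0 else 0.

Lemma Dea i : D i (ea i).
Proof. by rewrite /ea; case: (dk i); [exact: inD1|exact: inD1| do 2 eexists]. Qed.
Lemma Deb i : D i (eb i).
Proof. by rewrite /eb; case: (dk i); [exact: inD0|exact: inD0| do 2 eexists]. Qed.

Lemma ebfE : e = (\sum_i vm i (ea i), \sum_i vm i (eb i)).
Proof.
rewrite /ebf; congr (_, _); apply: eq_bigr => i _; rewrite /eps /ea /eb;
  by case: (dk i) => //=; rewrite (vm0 Hrep).
Qed.

Lemma half_eq : (2^-1 : R) * 2^-1 + 2^-1 * 2^-1 = 2^-1.
Proof. by field. Qed.

Lemma ea_idem i : ea i * ea i - eb i * eb i = ea i /\ ea i * eb i + eb i * ea i = eb i.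
Proof.
rewrite /ea /eb; case: (dk i); rewrite ?mulr1 ?mul0r ?subr0 ?addr0 ?mulr0 //.
rewrite !qmatM !qmatN !qmatD !mulr0 !mul0r ?subr0 ?addr0 ?oppr0 ?addr0.
by split; congr (qmat _ _); cx; rewrite /=; field.
Qed.

Lemma ebf_idem : tc_mul e e = e.
Proof.
rewrite ebfE /tc_mul /= !(sumvm_M Hrep); try (exact: Dea || exact: Deb).
rewrite -sumrB -big_split /=.
congr (_, _); apply: eq_bigr => i _; have [E1 E2] := ea_idem i.
  by rewrite -(vmB Hrep) ?E1 //; apply: inDM; by [apply: Dea | apply: Deb].
by rewrite -(vmD Hrep) ?E2 //; apply: inDM; by [apply: Dea | apply: Deb].
Qed.

Lemma sandwich_idem z : sandwich vm (sandwich vm z) = sandwich vm z.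
Proof.
rewrite /sandwich !tc_mulA ebf_idem -!tc_mulA ebf_idem.
by rewrite !tc_mulA.
Qed.

Lemma in_eTeE z : in_eTe vm z <-> sandwich vm z = z.
Proof.
split; last by move=> <-; exists z.
by case=> y ->; rewrite sandwich_idem.
Qed.

Lemma eTe_l z : in_eTe vm z -> tc_mul e z = z.
Proof. by case=> y ->; rewrite /sandwich -!tc_mulA ebf_idem. Qed.
Lemma eTe_r z : in_eTe vm z -> tc_mul z e = z.
Proof. by case=> y ->; rewrite /sandwich !tc_mulA ebf_idem. Qed.

Lemma eTe_mul x y : in_eTe vm x -> in_eTe vm y -> in_eTe vm (tc_mul x y).
Proof.
move=> Hx Hy; apply/in_eTeE.
by rewrite /sandwich -tc_mulA (eTe_l Hx) tc_mulA (eTe_r Hy).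
Qed.

Lemma eTe0 : in_eTe vm (0, 0).
Proof. by exists (0,0); rewrite /sandwich tc_mul0r tc_mul0l. Qed.

Lemma eTe_scale c z : in_eTe vm z -> in_eTe vm (tc_scale c z).
Proof.
move=> /in_eTeE Hz; apply/in_eTeE.
by rewrite /sandwich tc_scale_mulr tc_scale_mull -/(sandwich vm z) Hz.
Qed.

Lemma ea_nH i : dk i = KC -> ea i = 1. Proof. by rewrite /ea => ->. Qed.
Lemma eb_nH i : dk i = KC -> eb i = 0. Proof. by rewrite /eb => ->. Qed.

Lemma blk_eTe v y y' : dk v = KC -> D v y -> D v y' ->
  sandwich vm (vm v y, vm v y') = (vm v y, vm v y').
Proof.
move=> Hv Hy Hy'; rewrite /sandwich ebfE /tc_mul /=.
rewrite !(sumvm_l Hrep) //; try (exact: Dea || exact: Deb).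
rewrite ea_nH // eb_nH // !mul1r !mul0r (vm0 Hrep) subr0 addr0 !(sumvm_r Hrep) //;
  try (exact: Dea || exact: Deb).
by rewrite ea_nH // eb_nH // !mulr1 !mulr0 (vm0 Hrep) ?subr0 ?addr0 ?add0r ?sub0r.
Qed.

Definition gg (i : Q0 M) : 'M[R[i]]_2 := if dk i is KH then qmat 0 1 else 1.
Definition gi (i : Q0 M) : 'M[R[i]]_2 := if dk i is KH then qmat 0 (-1) else 1.
Lemma Dgg i : D i (gg i).
Proof. by rewrite /gg; case: (dk i); [exact: inD1|exact: inD1| do 2 eexists]. Qed.
Lemma Dgi i : D i (gi i).
Proof. by rewrite /gi; case: (dk i); [exact: inD1|exact: inD1| do 2 eexists]. Qed.

Definition GG : T := \sum_i vm i (gg i).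
Definition GI : T := \sum_i vm i (gi i).

Lemma GIG : GI * GG = 1.
Proof.
rewrite /GI /GG (sumvm_M Hrep); try (exact: Dgg || exact: Dgi).
rewrite -(sum_vm1 Hrep); apply: eq_bigr => i _; congr (vm _ _).
rewrite /gi /gg; case: (dk i); rewrite ?mulr1 // qmatM -qmat1; congr (qmat _ _); cx; rewrite /=; ring.
Qed.

Definition sgt := sg GG GI.

Lemma sum3 (a b c : Q0 M -> 'M[R[i]]_2) : (forall i, D i (a i)) -> (forall i, D i (b i)) ->
  (forall i, D i (c i)) ->
  (\sum_i vm i (a i)) * (\sum_i vm i (b i)) * (\sum_i vm i (c i)) = \sum_i vm i (a i * b i * c i).
Proof.
move=> Ha Hb Hc; rewrite (sumvm_M Hrep) // (sumvm_M Hrep) //.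
by move=> i; apply: inDM.
Qed.

Lemma sg_ebf : sgt e = e.
Proof.
rewrite /sgt /sg ebfE /= /GG /GI !sum3; try (exact: Dgg || exact: Dgi || exact: Dea || exact: Deb).
congr (_, _).
  apply: eq_bigr => i _; congr (vm _ _); rewrite /gg /ea /gi; case: (dk i); rewrite ?mulr1 ?mul1r //.
  rewrite !qmatM; congr (qmat _ _); cx; rewrite /=; ring.
rewrite (eq_bigr (fun i => - vm i (eb i))) ?sumrN ?opprK // => i _.
rewrite -(vmN Hrep); last exact: Deb.
congr (vm _ _); rewrite /gg /eb /gi; case: (dk i); rewrite ?mulr1 ?mul1r ?oppr0 //.
rewrite !qmatM qmatN; congr (qmat _ _); cx; rewrite /=; ring.
Qed.

Lemma sg_blk v y y' : dk v = KC -> D v y -> D v y' ->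
  sgt (vm v y, vm v y') = (vm v y, - vm v y').
Proof.
move=> Hv Hy Hy'; rewrite /sgt /sg /GG /GI /=.
rewrite !(sumvm_l Hrep) //; try exact: Dgg.
rewrite !(sumvm_r Hrep) //; try exact: Dgi; try (apply: inDM => //; exact: Dgg).
by rewrite /gg /gi Hv !mul1r !mulr1.
Qed.

Lemma sg_sandwich z : sgt (sandwich vm z) = sandwich vm (sgt z).
Proof. by rewrite /sandwich /sgt !sgM ?GIG // -/sgt sg_ebf. Qed.

Lemma sg_eTe z : in_eTe vm z -> in_eTe vm (sgt z).
Proof. by case=> y ->; rewrite sg_sandwich; exists (sgt y). Qed.

Lemma sgtM x y : sgt (tc_mul x y) = tc_mul (sgt x) (sgt y).
Proof. by rewrite /sgt sgM // GIG. Qed.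

Lemma sgt_inj x : sgt x = (0, 0) -> x = (0, 0).
Proof. apply: sg_inj; exact: GIG. Qed.

Section Ideal.
Variable I : T -> Prop.
Hypothesis HI : is_ideal I.
Definition Ip (z : tc T) := I z.1 /\ I z.2.

Lemma I_N x : I x -> I (- x).
Proof. by case: HI => _ _ HZ _ _ Hx; rewrite -scaleN1r; apply: HZ. Qed.
Lemma I_D x y : I x -> I y -> I (x + y).
Proof. by case: HI => _ HD _ _ _; apply: HD. Qed.
Lemma I_B x y : I x -> I y -> I (x - y).
Proof. by move=> Hx Hy; apply: I_D => //; apply: I_N. Qed.
Lemma I_L a x : I x -> I (a * x).
Proof. by case: HI => _ _ _ HL _; apply: HL. Qed.
Lemma I_R a x : I x -> I (x * a).
Proof. by case: HI => _ _ _ _ HR; apply: HR. Qed.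
Lemma I_Z r x : I x -> I (r *: x).
Proof. by case: HI => _ _ HZ _ _; apply: HZ. Qed.

Lemma Ip_mull a z : Ip z -> Ip (tc_mul a z).
Proof. by case=> H1 H2; split; rewrite /=; [apply: I_B|apply: I_D]; apply: I_L. Qed.
Lemma Ip_mulr z a : Ip z -> Ip (tc_mul z a).
Proof. by case=> H1 H2; split; rewrite /=; [apply: I_B|apply: I_D]; apply: I_R. Qed.
Lemma Ip_sandwich z : Ip z -> Ip (sandwich vm z).
Proof. by move=> H; apply: Ip_mulr; apply: Ip_mull. Qed.
Lemma Ip_sg z : Ip z -> Ip (sgt z).
Proof. by case=> H1 H2; split; rewrite /=; [|apply: I_N]; apply: I_R; apply: I_L. Qed.
Lemma Ip_scale c z : Ip z -> Ip (tc_scale c z).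
Proof.
case: c => a b [H1 H2]; split; rewrite /=; [apply: I_B|apply: I_D]; exact: I_Z.
Qed.
End Ideal.

Lemma rspan_map (S : T -> Prop) (f : T -> T) x :
  (forall x y, f (x + y) = f x + f y) -> f 0 = 0 -> (forall (r : R) x, f (r *: x) = r *: f x) ->
  (forall y, S y -> S (f y)) -> rspan S x -> rspan S (f x).
Proof.
move=> HD H0 HZ HS [l [Hl ->]]; exists [seq (p.1, f p.2) | p <- l]; split.
  by move=> p /mapP [q Hq ->] /=; apply: HS; apply: Hl.
elim: l Hl => [|p l IH] Hl; first by rewrite !big_nil.
rewrite /= !big_cons HD HZ IH; first by []. by move=> q Hq; apply: Hl; rewrite inE Hq orbT.
Qed.

Lemma rspanN (S : T -> Prop) x : rspan S x -> rspan S (- x).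
Proof.
move=> [l [Hl ->]]; exists [seq (- p.1, p.2) | p <- l]; split.
  by move=> p /mapP [q Hq ->] /=; apply: Hl.
rewrite big_map -sumrN; apply: eq_bigr => p _ /=; by rewrite scaleNr.
Qed.

Section Path2.
Variables (be al : Q1 M).

Lemma arr2P y : arr_prods am [:: be; al] y <->
  exists m1 m0, [/\ carrier al m1, carrier be m0 & y = am al m1 * am be m0].
Proof.
split.
  case=> m0 [z [H0 [m1 [z' [H1 Hz' Ez]]] ->]]; exists m1, m0; split => //.
  by rewrite Ez /= Hz' mul1r.
case=> m1 [m0 [H1 H0 ->]]; exists m0, (am al m1); split => //.
by exists m1, 1; split => //; rewrite mul1r.
Qed.

Lemma arr2_G y : arr_prods am [:: be; al] y -> arr_prods am [:: be; al] (GG * y * GI).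
Proof.
move=> /arr2P [m1 [m0 [H1 H0 ->]]]; apply/arr2P.
exists (gg (tgt al) * m1), (m0 * tw be (gi (src be))); split.
- apply: inDM => //; apply: inD_maxr; exact: Dgg.
- apply: inDM => //; apply: inD_maxl; apply: inD_tw; exact: Dgi.
- rewrite /GG /GI mulrA -(sumvm_am Hrep) //; last exact: Dgg.
  by rewrite -mulrA (am_sumvm Hrep) //; last exact: Dgi.
Qed.

Lemma Mpath2_sg z : Mpath vm am (src be, [:: be; al]) z.1 -> Mpath vm am (src be, [:: be; al]) z.2 ->
  Mpath vm am (src be, [:: be; al]) (sgt z).1 /\ Mpath vm am (src be, [:: be; al]) (sgt z).2.
Proof.
rewrite /Mpath /= => H1 H2; split.
  apply: (rspan_map (f := fun x => GG * x * GI)) H1 => //.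
  - by move=> x y; rewrite mulrDr mulrDl.
  - by rewrite mulr0 mul0r.
  - by move=> r x; rewrite -scalerAr -scalerAl.
  - exact: arr2_G.
apply: rspanN; apply: (rspan_map (f := fun x => GG * x * GI)) H2 => //.
- by move=> x y; rewrite mulrDr mulrDl.
- by rewrite mulr0 mul0r.
- by move=> r x; rewrite -scalerAr -scalerAl.
- exact: arr2_G.
Qed.
End Path2.

Section Block.
Variable v : Q0 M.
Hypothesis Hv : dk v = KC.
Definition blk (a c : R[i]) : tc T := (vm v (qmat a 0), vm v (qmat c 0)).

Lemma DqC a : D v (qmat a 0). Proof. by rewrite Hv; exists a. Qed.

Lemma vmqM a b : vm v (qmat a 0) * vm v (qmat b 0) = vm v (qmat (a * b) 0).
Proof. by rewrite -(vmM Hrep (DqC a) (DqC b)) qmatM !mulr0 !mul0r subr0 addr0. Qed.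
Lemma vmqD a b : vm v (qmat a 0) + vm v (qmat b 0) = vm v (qmat (a + b) 0).
Proof. by rewrite -(vmD Hrep (DqC a) (DqC b)) qmatD addr0. Qed.
Lemma vmqN a : - vm v (qmat a 0) = vm v (qmat (- a) 0).
Proof. by rewrite -(vmN Hrep (DqC a)) qmatN oppr0. Qed.

Lemma blkM a c a' c' : tc_mul (blk a c) (blk a' c') = blk (a*a' - c*c') (a*c' + c*a').
Proof. by rewrite /tc_mul /blk /= !vmqM vmqN !vmqD. Qed.

Lemma blk_sand a c : sandwich vm (blk a c) = blk a c.
Proof. exact: (blk_eTe Hv (DqC a) (DqC c)). Qed.

Lemma sg_blk' a c : sgt (blk a c) = blk a (- c).
Proof. by rewrite /blk (sg_blk Hv (DqC a) (DqC c)) vmqN. Qed.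

Lemma blk0 : blk 0 0 = (0, 0).
Proof. by rewrite /blk qmat0 (vm0 Hrep). Qed.

Lemma P0_blk a c : vm v 1 = 0 -> blk a c = (0, 0).
Proof.
move=> HP; rewrite /blk -(vm1l Hrep (DqC a)) -(vm1l Hrep (DqC c)) HP !mul0r //.
Qed.

Lemma vm_qinj a a' : vm v 1 != 0 -> vm v (qmat a 0) = vm v (qmat a' 0) -> a = a'.
Proof.
move=> HP E; apply/eqP; rewrite -subr_eq0; apply/negP => /negP Hd.
have H0 : vm v (qmat (a - a') 0) = 0 by rewrite -vmqD -vmqN E subrr.
move: HP; rewrite -qmat1 -(mulVf Hd) -vmqM H0 mulr0 eqxx //.
Qed.

Lemma blk_eq a c a' c' : vm v 1 != 0 -> blk a c = blk a' c' -> a = a' /\ c = c'.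
Proof. by move=> HP [/(vm_qinj HP) -> /(vm_qinj HP) ->]. Qed.
End Block.

Lemma cg_mul_ext (f f' g g' : cg M R) q : (forall q, f q = f' q) -> (forall q, g q = g' q) ->
  cg_mul f g q = cg_mul f' g' q.
Proof. by move=> Hf Hg; rewrite /cg_mul; apply: eq_bigr => k _; rewrite Hf Hg. Qed.

Section PsiSec.
Variable I : T -> Prop.
Hypothesis HI : is_ideal I.
Variable Psi : tc T -> cg M R.
Hypothesis Hiso : is_cx_iso vm am Psi.

Lemma PsiD z w q : in_eTe vm z -> in_eTe vm w -> Psi (tc_add z w) q = Psi z q + Psi w q.
Proof. by case: Hiso => H _ _ _ _ Hz Hw; apply: H. Qed.
Lemma PsiZ c z q : in_eTe vm z -> Psi (tc_scale c z) q = c * Psi z q.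
Proof. by case: Hiso => _ H _ _ _ Hz; apply: H. Qed.
Lemma PsiM z w q : in_eTe vm z -> in_eTe vm w -> Psi (tc_mul z w) q = cg_mul (Psi z) (Psi w) q.
Proof. by case: Hiso => _ _ H _ _ Hz Hw; apply: H. Qed.
Lemma Psi_inj z w : in_eTe vm z -> in_eTe vm w -> (forall q, Psi z q = Psi w q) -> z = w.
Proof. by case: Hiso => _ _ _ _ [_ H _ _]; apply: H. Qed.
Lemma Psi_surj f : cg_supp f -> exists z, in_eTe vm z /\ forall q, Psi z q = f q.
Proof. by case: Hiso => _ _ _ _ [_ _ H _]; apply: H. Qed.
Lemma Psi_path p : qchain p.1 p.2 -> forall f : cg M R,
  (exists z, [/\ Mpath vm am p z.1, Mpath vm am p z.2 & forall q, Psi (sandwich vm z) q = f q])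
  <-> (forall q, f q != 0 -> is_fiber q p).
Proof. by case: Hiso => _ _ _ _ [_ _ _ H]; apply: H. Qed.

Lemma Psi0 q : Psi (0, 0) q = 0.
Proof.
have := PsiD q eTe0 eTe0; rewrite /tc_add /= addr0 => /eqP.
by rewrite -subr_eq subrr eq_sym => /eqP.
Qed.

Lemma delta_pre (g : gpath M) : gvalid g ->
  exists X, in_eTe vm X /\ forall q, Psi X q = cg_delta R g q.
Proof.
move=> Hg; apply: Psi_surj => q Hq; rewrite /cg_delta.
by case: eqP => // E; move: Hq; rewrite E Hg.
Qed.


Section Main.
Local Arguments gsrc : simpl never.
Local Arguments gtgt : simpl never.
Variables (be al : Q1 M).
Hypothesis Htree : is_tree M.
Hypothesis Hv : tgt be = src al.
Hypothesis HC : dk (src al) = KC.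

Local Notation v := (src al).

Lemma gvalid_mid (b : bool) : gvalid ((v, b), [::] : seq (Q1 M * bool)).
Proof. by rewrite /gvalid /= /gvert_ok /= HC implybT. Qed.

Lemma gvalid_al' b : gvalid ((v, b), [:: (al, c2 al b)]).
Proof.
rewrite /gvalid /= /gvert_ok /= HC implybT /garr_ok /= (barok_al HC) implybT /=.
by rewrite (gsrc_al HC) eqxx.
Qed.

Lemma gvalid_be' b : gvalid (gsrc (be, b), [:: (be, b)]).
Proof.
have := fib_valid Hv HC b; rewrite /gvalid /fib /= => /and3P [H1 /andP [H2 _] /andP [H3 _]].
by rewrite H1 H2 H3.
Qed.

Lemma main_dir b : inJ vm I Psi (cg_delta R (fib be al b)) ->
  inJ vm I Psi (cg_delta R (fib be al (~~ b))).
Proof.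
case=> z [Iz1 Iz2 Hz].
set p := fib be al b.
set w := sandwich vm z.
have Hw : in_eTe vm w by exists z.
have HwI : Ip I w by apply: Ip_sandwich.
set al' : gpath M := ((v, b), [:: (al, c2 al b)]).
set be' : gpath M := (gsrc (be, b), [:: (be, b)]).
set mid : gpath M := ((v, b), [::]).
set mid' : gpath M := ((v, ~~ b), [::]).
have [X [HX PX]] := delta_pre (gvalid_al' b).
have [Y [HY PY]] := delta_pre (gvalid_be' b).
have [Eb [HEb PEb]] := delta_pre (gvalid_mid b).
have [Enb [HEnb PEnb]] := delta_pre (gvalid_mid (~~ b)).
have EwXY : w = tc_mul X Y.
  apply: Psi_inj => // [|q]; first exact: eTe_mul.
  rewrite Hz PsiM // (cg_mul_ext _ PX PY) cg_mul_delta /=.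
  by rewrite /gend /= (gtgt_be Hv HC) eqxx.
have EXE : X = tc_mul X Eb.
  apply: Psi_inj => // [|q]; first exact: eTe_mul.
  by rewrite PsiM // (cg_mul_ext _ PX PEb) cg_mul_delta /= eqxx /= PX.
have blkform : forall (bb : bool) E, in_eTe vm E -> (forall q, Psi E q = cg_delta R ((v, bb), [::]) q) ->
    exists a c, E = blk v a c.
  move=> bb E HE PE.
  have [] := (Psi_path (p := (v, [::])) isT (cg_delta R ((v, bb), [::]))).2.
    move=> q; rewrite /cg_delta; case: (q =P ((v, bb), [::])) => [-> _|]; last by rewrite eqxx.
    by split => //; exact: gvalid_mid.
  move=> z0 [/= [y1 [Hy1 E1]] [y2 [Hy2 E2]] Pz0].
  move: Hy1 Hy2; rewrite HC => -[a Ea] [c Ec]; exists a, c.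
  have Ez0 : sandwich vm z0 = blk v a c.
    by rewrite (surjective_pairing z0) E1 E2 Ea Ec (blk_sand HC).
  apply: Psi_inj => // [|q]; first by exists (blk v a c); rewrite (blk_sand HC).
  by rewrite PE -Pz0 Ez0.
have [a [c Ea]] := blkform b Eb HEb PEb.
have [a' [c' Ea']] := blkform (~~ b) Enb HEnb PEnb.
have Eb0 : Eb <> (0, 0).
  move=> E0; have := PEb mid; rewrite E0 Psi0 /cg_delta eqxx => /eqP; by rewrite eq_sym oner_eq0.
have Enb0 : Enb <> (0, 0).
  move=> E0; have := PEnb mid'; rewrite E0 Psi0 /cg_delta eqxx => /eqP; by rewrite eq_sym oner_eq0.
have HP : vm v 1 != 0.
  by apply/eqP => HP; apply: Eb0; rewrite Ea (P0_blk HC).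
have idem : forall (bb : bool) E, in_eTe vm E -> (forall q, Psi E q = cg_delta R ((v, bb), [::]) q) ->
    tc_mul E E = E.
  move=> bb E HE PE; apply: Psi_inj => // [|q]; first exact: eTe_mul.
  by rewrite PsiM // (cg_mul_ext _ PE PE) cg_mul_delta /= eqxx PE.
have orth : tc_mul Eb Enb = (0, 0).
  apply: (Psi_inj (eTe_mul HEb HEnb) eTe0) => q.
  rewrite PsiM // (cg_mul_ext _ PEb PEnb) cg_mul_delta /= Psi0.
  by case: b {p Hz HwI EwXY EXE PX PY PEb PEnb Ea Ea' Eb0 Enb0 Iz1 Iz2 al' be' mid mid'} => /=;
    rewrite /gend /= ?eqE /= eqxx /= ?andbF.
have I1 := idem b Eb HEb PEb.
have I2 := idem (~~ b) Enb HEnb PEnb.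
move: I1 I2 orth; rewrite Ea Ea' !(blkM HC) -(blk0 v) => /(blk_eq HC HP) [H1 H2] /(blk_eq HC HP) [H3 H4]
  /(blk_eq HC HP) [H5 H6].
have [Ha Hc] : a' = a /\ c' = - c.
  apply: cx_key => //.
  - by case=> E1 E2; apply: Eb0; rewrite Ea E1 E2 (blk0 v).
  - by case=> E1 E2; apply: Enb0; rewrite Ea' E1 E2 (blk0 v).
have sgE : sgt Eb = Enb by rewrite Ea Ea' (sg_blk' HC) Ha Hc.
have HX' := sg_eTe HX; have HY' := sg_eTe HY.
have Esw : sgt w = tc_mul (tc_mul (sgt X) Enb) (sgt Y) by rewrite EwXY sgtM {1}EXE sgtM sgE.
set f := Psi (sgt w).
have Hf : forall q, f q = cg_mul (cg_mul (Psi (sgt X)) (cg_delta R mid')) (Psi (sgt Y)) q.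
  move=> q; rewrite /f Esw PsiM //; last exact: eTe_mul.
  apply: cg_mul_ext => // q'; rewrite PsiM //; apply: cg_mul_ext => //.
have Hne1 : src be != src al by rewrite -Hv; exact: tree_noloop.
have Hne2 : tgt al != src al by rewrite eq_sym; exact: tree_noloop.
have fp : f p = 0.
  rewrite Hf; apply: cg_mul_mid0 => k; exact: gend_fib.
have [zp [Mp1 Mp2 Pzp]] : exists z, [/\ Mpath vm am (src be, [:: be; al]) z.1,
    Mpath vm am (src be, [:: be; al]) z.2 & forall q, Psi (sandwich vm z) q = cg_delta R p q].
  apply/(Psi_path (p := (src be, [:: be; al]))); first by rewrite /= Hv !eqxx.
  move=> q; rewrite /cg_delta; case: (q =P p) => [-> _|]; last by rewrite eqxx.
  exact: fib_fiber.
have Ewz : w = sandwich vm zp.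
  by apply: Psi_inj => //; [exists zp | move=> q; rewrite Hz Pzp].
have [Ms1 Ms2] := Mpath2_sg Mp1 Mp2.
have Hsupp : forall q, f q != 0 -> is_fiber q (src be, [:: be; al]).
  apply/(Psi_path (p := (src be, [:: be; al]))); first by rewrite /= Hv !eqxx.
  by exists (sgt zp); split => // q; rewrite /f Ewz sg_sandwich.
have Hq : forall q, q != fib be al (~~ b) -> f q = 0.
  move=> q Hq; apply/eqP/negPn/negP => Hnz.
  have [b' Eq] := fiberP Hv HC (Hsupp q Hnz).
  case: (b' =P b) => Eb'.
    by move: Hnz; rewrite Eq Eb' -/p fp eqxx.
  have Eb2 : b' = ~~ b by move: Eb'; case: (b'); case: (b).
  by move: Hq; rewrite Eq Eb2 eqxx.
set cc := f (fib be al (~~ b)).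
have Hc0 : cc != 0.
  apply/eqP => Hc0.
  have Hall : forall q, f q = Psi (0, 0) q.
    move=> q; rewrite Psi0; case: (q =P fib be al (~~ b)) => [->|/eqP]; first exact: Hc0.
    exact: Hq.
  have := Psi_inj (sg_eTe Hw) eTe0 Hall => /sgt_inj Ew0.
  have := Hz p; rewrite -/w Ew0 Psi0 /cg_delta eqxx => /eqP; by rewrite eq_sym oner_eq0.
have Hs : in_eTe vm (tc_scale cc^-1 (sgt w)) by apply: eTe_scale; exact: sg_eTe.
exists (tc_scale cc^-1 (sgt w)); split.
- by case: (Ip_scale HI cc^-1 (Ip_sg HI HwI)).
- by case: (Ip_scale HI cc^-1 (Ip_sg HI HwI)).
- move=> q; rewrite (in_eTeE _).1 // PsiZ; last exact: sg_eTe.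
  rewrite -/f /cg_delta; case: (q =P fib be al (~~ b)) => [->|/eqP Hqn].
    by rewrite -/cc mulVf.
  by rewrite Hq // mulr0.
Qed.
End Main.
End PsiSec.
End Core.

Theorem lemma6p4 (R : realType) (M : mquiver) (T : algType R)
    (vm : Q0 M -> 'M[R[i]]_2 -> T) (am : Q1 M -> 'M[R[i]]_2 -> T)
    (I : T -> Prop) (Psi : tc T -> cg M R) (be al : Q1 M) :
  is_tree M ->
  is_tensor_alg vm am ->
  admissible am I ->
  is_cx_iso vm am Psi ->
  tgt be = src al ->          (* be : u -> v, al : v -> w *)
  dk (src al) = KC ->         (* M(v) = C *)
  let ab := (src be, [:: be; al]) in   (* the path al be of Q *)
  (exists p : gpath M, p <> taup p /\
     forall q, is_fiber q ab <-> q = p \/ q = taup p) /\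
  (forall p, is_fiber p ab ->
     (inJ vm I Psi (cg_delta R p) <-> inJ vm I Psi (cg_delta R (taup p)))).
Proof.
move=> Htree [Hrep _] [HI _] Hiso Hv HC ab; split.
  exists (fib be al false); split; first by rewrite (taup_fib Hv HC); exact: fib_neq.
  move=> q; rewrite (taup_fib Hv HC); split.
    by move/(fiberP Hv HC) => [[] ->]; [right|left].
  by case=> ->; exact: fib_fiber.
move=> p /(fiberP Hv HC) [b ->]; rewrite (taup_fib Hv HC); split.
  exact: (main_dir Hrep HI Hiso Htree Hv HC).
by move/(main_dir Hrep HI Hiso Htree Hv HC); rewrite negbK.
Qed.
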